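(* Let $\mathcal{H}=\bigoplus_{n\ge0}\mathcal{H}_n$ be a Hilbert space with a fixed orthogonal decomposition, and let $T\in B(\mathcal{H})$ be band-limited with band limit $b\ge0$. Then $T$ can be decomposed as $T=\sum_{k=0}^b X_k+\sum_{k=1}^b Y_k$, where each $X_k$ ($0\le k\le b$) is a $k$-raising operator and each $Y_k$ ($1\le k\le b$) is a $k$-lowering operator. This decomposition is unique. Moreover, if $T$ is summable, then each $X_k$ and each $Y_k$ is summable.
   Context: $T\in B(\mathcal{H})$ is band-limited with band limit $b$ if $T(\mathcal{H}_n)\subseteq\bigoplus_{m\ge0,|m-n|\le b}\mathcal{H}_m$ for all $n\ge0$. A band-limited $T$ is summable if $\sum_{n\ge0}\|T|_{\mathcal{H}_n}\|<\infty$ ($T|_{\mathcal{H}_n}$ the restriction to $\mathcal{H}_n$). A band-limited $T$ is $k$-raising ($k\ge0$) if $T(\mathcal{H}_n)\subseteq\mathcal{H}_{n+k}$ for all $n\ge0$, and $k$-lowering if $T(\mathcal{H}_n)\subseteq\mathcal{H}_{n-k}$ for $n\ge k$ and $T(\mathcal{H}_n)=\{0\}$ for $n<k$. *)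

(* Defs.v *)
From HB Require Import structures.
From mathcomp Require Import all_boot all_order all_algebra.
From mathcomp Require Import all_classical all_reals all_analysis.
From mathcomp Require Import complex.
Import Order.TTheory GRing.Theory Num.Theory.
Import numFieldNormedType.Exports.

Set Implicit Arguments.
Unset Strict Implicit.
Unset Printing Implicit Defensive.

Local Open Scope classical_set_scope.
Local Open Scope ring_scope.

Section HilbertDefs.
Variable R : realType.
Variable V : completeNormedModType R[i].

(* An inner product inducing the norm of V: together with completeness of V
   this makes V a (complex) Hilbert space. *)
Record inner_product := InnerProduct {
  ip :> V -> V -> R[i];
  ip_linearl : forall (a : R[i]) (x y z : V), ip (a *: x + y) z = a * ip x z + ip y z;
  ip_conj : forall x y : V, ip y x = (ip x y)^*;
  ip_norm : forall x : V, ip x x = `|x| ^+ 2 }.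

Definition subspace (A : set V) :=
  A 0 /\ (forall (a : R[i]) (x y : V), A x -> A y -> A (a *: x + y)).

(* the (algebraic = orthogonal, since finite) sum  H_lo + ... + H_(hi-1) *)
Definition finsum_sub (H : nat -> set V) (lo hi : nat) : set V :=
  [set v | exists x : nat -> V,
     (forall m, (lo <= m < hi)%N -> H m (x m)) /\ v = \sum_(lo <= m < hi) x m].

(* H = \bigoplus_(n >= 0) H_n : closed, pairwise orthogonal subspaces whose
   algebraic span is dense in V *)
Definition orth_decomp (ip : inner_product) (H : nat -> set V) :=
  [/\ forall n, subspace (H n),
      forall n, closed (H n),
      forall n m x y, n <> m -> H n x -> H m y -> ip x y = 0 &
      closure [set v | exists N, finsum_sub H 0 N v] = setT].

Definition bounded_op (T : {linear V -> V}) := continuous (T : V -> V).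

(* T(H_n) is contained in \bigoplus_{m >= 0, |m - n| <= b} H_m *)
Definition band_limited (H : nat -> set V) (b : nat) (T : {linear V -> V}) :=
  forall n x, H n x -> finsum_sub H (n - b) (n + b).+1 (T x).

Definition raising (H : nat -> set V) (k : nat) (T : {linear V -> V}) :=
  forall n x, H n x -> H (n + k)%N (T x).

Definition lowering (H : nat -> set V) (k : nat) (T : {linear V -> V}) :=
  forall n x, H n x ->
    ((k <= n)%N -> H (n - k)%N (T x)) /\ ((n < k)%N -> T x = 0).

Definition restr_norm (T : {linear V -> V}) (A : set V) : \bar R :=
  ereal_sup [set ((complex.Re `|T x|)%:E)%E | x in [set x | A x /\ `|x| <= 1]].

Definition summable_op (H : nat -> set V) (T : {linear V -> V}) :=
  (\sum_(0 <= n <oo) restr_norm T (H n) < +oo)%E.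

Definition band_decomposition (H : nat -> set V) (b : nat) (T : {linear V -> V})
    (X Y : nat -> {linear V -> V}) :=
  [/\ forall k, (k <= b)%N -> bounded_op (X k) /\ raising H k (X k),
      forall k, (1 <= k <= b)%N -> bounded_op (Y k) /\ lowering H k (Y k) &
      forall v, T v = \sum_(0 <= k < b.+1) X k v + \sum_(1 <= k < b.+1) Y k v].

End HilbertDefs.

(* Main.v *)
Require Import Defs.
From HB Require Import structures.
From mathcomp Require Import all_boot all_order all_algebra.
From mathcomp Require Import all_classical all_reals all_analysis.
From mathcomp Require Import complex.
From mathcomp Require Import ring lra zify.
Import Order.TTheory GRing.Theory Num.Theory.
Import numFieldNormedType.Exports.
Local Open Scope classical_set_scope.
Local Open Scope complex_scope.
Local Open Scope ring_scope.
Section Basics.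
Variables (R : realType) (V : completeNormedModType R[i]).

Definition nrm (x : V) : R := complex.Re `|x|.
Definition ca (a : R[i]) : R := complex.Re `|a|.

Lemma realC_Re (z : R[i]) : 0 <= z -> z = (complex.Re z)%:C.
Proof. by case: z => a b; rewrite lecE /= => /andP[/eqP -> _]. Qed.

Lemma normE (x : V) : `|x| = (nrm x)%:C.
Proof. exact/realC_Re. Qed.

Lemma caE (a : R[i]) : `|a| = (ca a)%:C.
Proof. exact/realC_Re. Qed.

Lemma nrm_ge0 x : 0 <= nrm x.
Proof. by have := normr_ge0 x; rewrite normE lecE /= => /andP[_]. Qed.

Lemma ca_ge0 a : 0 <= ca a.
Proof. by have := normr_ge0 a; rewrite caE lecE /= => /andP[_]. Qed.

Lemma nrmD x y : nrm (x + y) <= nrm x + nrm y.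
Proof.
by have := ler_normD x y; rewrite !normE lecE /= => /andP[_].
Qed.

Lemma nrmZ a x : nrm (a *: x) = ca a * nrm x.
Proof. by rewrite /nrm normrZ caE normE /= mulr0 subr0. Qed.

Lemma nrmN x : nrm (- x) = nrm x.
Proof. by rewrite /nrm normrN. Qed.

Lemma nrmB x y : nrm (x - y) = nrm (y - x).
Proof. by rewrite /nrm distrC. Qed.

Lemma nrm0 : nrm 0 = 0.
Proof. by rewrite /nrm normr0. Qed.

Lemma nrm_eq0 x : nrm x = 0 -> x = 0.
Proof. by move=> h; apply/normr0_eq0; rewrite normE h. Qed.

End Basics.
Arguments nrm {R V}.
Arguments ca {R}.
Arguments nrm_eq0 {R V}.
Arguments nrm_ge0 {R V}.
Arguments nrmD {R V}.
Arguments nrmZ {R V}.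
Arguments nrmN {R V}.
Arguments nrmB {R V}.
Arguments ca_ge0 {R}.
Arguments nrm0 {R V}.
Arguments realC_Re {R}.
Arguments normE {R V}.
Arguments caE {R}.

Section IP.
Variables (R : realType) (V : completeNormedModType R[i]) (ip : inner_product V).

Lemma ip0l z : ip 0 z = 0.
Proof.
have := ip_linearl ip 1 0 0 z; rewrite scaler0 addr0 mul1r.
by move=> /(congr1 (fun t => t - ip 0 z)); rewrite subrr addrK => h; rewrite -h.
Qed.

Lemma ipDl x y z : ip (x + y) z = ip x z + ip y z.
Proof. by have := ip_linearl ip 1 x y z; rewrite scale1r mul1r. Qed.

Lemma ipZl a x z : ip (a *: x) z = a * ip x z.
Proof. by have := ip_linearl ip a x 0 z; rewrite addr0 ip0l addr0. Qed.

Lemma ipNl x z : ip (- x) z = - ip x z.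
Proof. by rewrite -scaleN1r ipZl mulN1r. Qed.

Lemma ipBl x y z : ip (x - y) z = ip x z - ip y z.
Proof. by rewrite ipDl ipNl. Qed.

Lemma ip0r z : ip z 0 = 0.
Proof. by rewrite ip_conj ip0l conjC0. Qed.

Lemma ipDr x y z : ip z (x + y) = ip z x + ip z y.
Proof.
rewrite (ip_conj _ (x + y) z) ipDl rmorphD.
by congr (_ + _); rewrite [RHS]ip_conj.
Qed.

Lemma ipNr x z : ip z (- x) = - ip z x.
Proof. by rewrite (ip_conj _ (- x) z) ipNl rmorphN [in RHS]ip_conj. Qed.

Lemma ipBr x y z : ip z (x - y) = ip z x - ip z y.
Proof. by rewrite ipDr ipNr. Qed.

Lemma ip_suml (I : Type) (r : seq I) (P : pred I) (F : I -> V) z :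
  ip (\sum_(i <- r | P i) F i) z = \sum_(i <- r | P i) ip (F i) z.
Proof.
elim/big_rec2: _ => [|i y1 y2 _ <-]; first exact: ip0l.
exact: ipDl.
Qed.

Lemma ip_sumr (I : Type) (r : seq I) (P : pred I) (F : I -> V) z :
  ip z (\sum_(i <- r | P i) F i) = \sum_(i <- r | P i) ip z (F i).
Proof.
elim/big_rec2: _ => [|i y1 y2 _ <-]; first exact: ip0r.
exact: ipDr.
Qed.

Lemma ip_self x : ip x x = (nrm x ^+ 2)%:C.
Proof. by rewrite ip_norm normE -rmorphXn. Qed.

Lemma ip_self_eq0 x : ip x x = 0 -> x = 0.
Proof.
rewrite ip_self => -[] /eqP; rewrite expf_eq0 /= => /eqP; exact: nrm_eq0.
Qed.

Lemma pyth2 x y : ip x y = 0 -> nrm (x + y) ^+ 2 = nrm x ^+ 2 + nrm y ^+ 2.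
Proof.
move=> h; have h' : ip y x = 0 by rewrite ip_conj h conjC0.
have e : ip (x + y) (x + y) = ip x x + ip y y.
  by rewrite ipDl !ipDr h h' addr0 add0r.
by move: e; rewrite !ip_self -rmorphD => -[].
Qed.

Lemma pyth2_le x y : ip x y = 0 -> nrm x <= nrm (x + y).
Proof.
move=> /pyth2 h; have := nrm_ge0 x; have := nrm_ge0 (x + y); have := nrm_ge0 y.
nra.
Qed.

Lemma pythN (z : nat -> V) N :
  (forall i j, (i < N)%N -> (j < N)%N -> i <> j -> ip (z i) (z j) = 0) ->
  nrm (\sum_(i < N) z i) ^+ 2 = \sum_(i < N) nrm (z i) ^+ 2.
Proof.
elim: N => [|N IH] h; first by rewrite !big_ord0 nrm0 expr0n.
rewrite !big_ord_recr /= pyth2 ?IH //.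
- by move=> i j hi hj; apply: h; apply: ltnW.
rewrite ip_suml big1 // => i _; apply: h => //; first exact: ltn_trans (ltn_ord i) _.
by move=> e; have := ltn_ord i; rewrite e ltnn.
Qed.

End IP.
Arguments ip0l {R V}.
Arguments ipDl {R V}.
Arguments ipZl {R V}.
Arguments ipNl {R V}.
Arguments ipBl {R V}.
Arguments ip0r {R V}.
Arguments ipDr {R V}.
Arguments ipNr {R V}.
Arguments ipBr {R V}.
Arguments ip_suml {R V}.
Arguments ip_sumr {R V}.
Arguments ip_self {R V}.
Arguments ip_self_eq0 {R V}.
Arguments pyth2 {R V}.
Arguments pyth2_le {R V}.
Arguments pythN {R V}.
Section Topo.
Variables (R : realType) (V : completeNormedModType R[i]).

Lemma posC (e : R[i]) : 0 < e -> e = (complex.Re e)%:C /\ 0 < complex.Re e.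
Proof.
move=> e0; have := realC_Re e (ltW e0) => ee; split => //.
by move: e0; rewrite ee ltcR.
Qed.

Lemma complete_seq (u : nat -> V) :
  (forall e : R, 0 < e -> exists N, forall i j, (N <= i)%N -> (N <= j)%N ->
     nrm (u i - u j) < e) ->
  exists l, forall e : R, 0 < e -> exists N, forall j, (N <= j)%N -> nrm (l - u j) < e.
Proof.
move=> hc.
have : cauchy_ex (u @ \oo).
  move=> e /posC [ee e0]; have [N hN] := hc _ e0.
  exists (u N); exists N => // n /= hn.
  by rewrite -ball_normE /= normE ee ltcR; apply: hN.
move=> /cauchy_exP /cauchy_cvg /cvgrPdist_lt h.
exists (lim (u @ \oo)) => e e0.
have e0' : (0 : R[i]) < e%:C by rewrite ltcR.
have [N _ HN] := h _ e0'.
exists N => j hj; have := HN j hj; by rewrite normE ltcR.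
Qed.

Lemma dense_approx (D : set V) : closure D = setT ->
  forall v (e : R), 0 < e -> exists d, D d /\ nrm (v - d) < e.
Proof.
move=> cD v e e0.
have : closure D v by rewrite cD.
move=> /(_ (ball v e%:C)) []; first by apply: nbhsx_ballx; rewrite ltcR.
move=> d [Dd bd]; exists d; split => //.
by move: bd; rewrite -ball_normE /= normE ltcR.
Qed.

End Topo.
Arguments posC {R}.
Arguments complete_seq {R V}.
Arguments dense_approx {R V}.
Section Bnd.
Variables (R : realType) (V : completeNormedModType R[i]).

Lemma op_bound (T : {linear V -> V}) : continuous T ->
  exists C : R, 0 < C /\ forall x, nrm (T x) <= C * nrm x.
Proof.
move=> cT; have := @continuous_linear_bounded _ V V 0 T (cT 0).
move=> /linear_boundedP /pinfty_ex_gt0 [r /posC [re r0] hr].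
exists (complex.Re r); split => // x.
by have := hr x; rewrite !normE re -rmorphM lecR.
Qed.

Lemma bound_cont (g : {linear V -> V}) (C : R) :
  (forall x, nrm (g x) <= C * nrm x) -> continuous g.
Proof.
move=> hg; apply/linear_bounded_continuous/linear_boundedP.
exists (`|C|)%:C; split; first by rewrite realE lecR normr_ge0.
move=> r hr x.
have r0 : 0 <= r by apply: le_trans (ltW hr); rewrite lecR.
have re := realC_Re r r0; move: hr; rewrite re ltcR => hr.
rewrite !normE -rmorphM lecR; apply: le_trans (hg x) _.
apply: ler_wpM2r; first exact: nrm_ge0.
exact: le_trans (ler_norm C) (ltW hr).
Qed.

End Bnd.
Arguments op_bound {R V}.
Arguments bound_cont {R V}.
Set Implicit Arguments.
Unset Strict Implicit.
Section Decomp.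
Variables (R : realType) (V : completeNormedModType R[i]) (ip : inner_product V)
  (H : nat -> set V) (HD : orth_decomp ip H).

Lemma Hsub n : Defs.subspace (H n). Proof. by have := HD; rewrite /orth_decomp => -[h _ _ _]; apply: h. Qed.
Lemma Horth n m x y : n <> m -> H n x -> H m y -> ip x y = 0.
Proof. by have := HD; rewrite /orth_decomp => -[_ _ h _]; apply: h. Qed.
Lemma Hdense : closure [set v | exists N, finsum_sub H 0 N v] = setT.
Proof. by have := HD; rewrite /orth_decomp => -[_ _ _ h]. Qed.

Lemma H0 n : H n 0. Proof. by have := Hsub n; rewrite /Defs.subspace => -[h _]. Qed.
Lemma HZD n a x y : H n x -> H n y -> H n (a *: x + y).
Proof. by have := Hsub n; rewrite /Defs.subspace => -[_ h]; apply: h. Qed.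
Lemma HDD n x y : H n x -> H n y -> H n (x + y).
Proof. by move=> hx hy; have := @HZD n 1 _ _ hx hy; rewrite scale1r. Qed.
Lemma HZ n a x : H n x -> H n (a *: x).
Proof. by move=> hx; have := @HZD n a _ _ hx (H0 n); rewrite addr0. Qed.
Lemma HN n x : H n x -> H n (- x).
Proof. by move=> hx; rewrite -scaleN1r; apply: HZ. Qed.
Lemma HBB n x y : H n x -> H n y -> H n (x - y).
Proof. by move=> hx hy; apply: HDD => //; apply: HN. Qed.
Lemma Hsum n (I : Type) (r : seq I) (P : pred I) (F : I -> V) :
  (forall i, P i -> H n (F i)) -> H n (\sum_(i <- r | P i) F i).
Proof.
move=> hF; elim/big_rec: _ => [|i y Pi hy]; first exact: H0.
by apply: HDD => //; apply: hF.
Qed.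

Lemma ip_sum_out (x : nat -> V) lo hi j y :
  (forall m, (lo <= m < hi)%N -> H m (x m)) -> H j y -> ~~ (lo <= j < hi)%N ->
  ip (\sum_(lo <= m < hi) x m) y = 0.
Proof.
move=> hx hy hj; rewrite ip_suml big_nat_cond big1 // => m /andP[hm _].
apply: (@Horth _ _ _ _ _ (hx m hm) hy) => e; by rewrite -e hm in hj.
Qed.

Lemma ip_sum_in (x : nat -> V) lo hi j y :
  (forall m, (lo <= m < hi)%N -> H m (x m)) -> H j y -> (lo <= j < hi)%N ->
  ip (\sum_(lo <= m < hi) x m) y = ip (x j) y.
Proof.
move=> hx hy hj; rewrite ip_suml (bigD1_seq j) ?mem_index_iota ?iota_uniq //=.
rewrite big_seq_cond big1 ?addr0 // => m /andP[hm hmj].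
rewrite mem_index_iota in hm.
by apply: (@Horth _ _ _ _ _ (hx m hm) hy) => e; rewrite e eqxx in hmj.
Qed.

Lemma zero_decomp (z : nat -> V) lo hi :
  (forall m, (lo <= m < hi)%N -> H m (z m)) -> \sum_(lo <= m < hi) z m = 0 ->
  forall j, (lo <= j < hi)%N -> z j = 0.
Proof.
move=> hz h0 j hj; apply: (ip_self_eq0 ip).
by rewrite -(ip_sum_in hz (hz j hj) hj) h0 ip0l.
Qed.

Lemma sum_support (F : nat -> V) N M :
  (forall j, (N <= j)%N -> F j = 0) -> (forall j, (M <= j)%N -> F j = 0) ->
  \sum_(0 <= j < N) F j = \sum_(0 <= j < M) F j.
Proof.
wlog hNM : N M / (N <= M)%N.
  move=> hw hN hM; case: (leqP N M) => h; first exact: hw.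
  by apply/esym/hw => //; apply: ltnW.
move=> hN _; rewrite [in RHS](big_cat_nat (n:=N)) ?leq0n //=.
rewrite [X in _ = _ + X]big1_seq ?addr0 // => j /andP[_].
by rewrite mem_index_iota => /andP[hj _]; apply: hN.
Qed.

Definition rep (d : V) (x : nat -> V) (N : nat) :=
  [/\ forall m, H m (x m), forall m, (N <= m)%N -> x m = 0 &
      d = \sum_(0 <= m < N) x m].

Definition DD := [set v | exists N, finsum_sub H 0 N v].

Lemma rep_sum d x N M : rep d x N -> (N <= M)%N -> d = \sum_(0 <= m < M) x m.
Proof.
case=> _ hx -> hNM; apply: sum_support => // j hj; apply: hx.
exact: leq_trans hNM hj.
Qed.

Lemma rep_widen d x N M : rep d x N -> (N <= M)%N -> rep d x M.
Proof.
move=> r hNM; have := r; case=> h1 h2 _; split => //.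
  by move=> m hm; apply: h2; apply: leq_trans hm.
exact: rep_sum r hNM.
Qed.

Lemma rep_DD d x N : rep d x N -> DD d.
Proof. by case=> h1 _ ->; exists N, x. Qed.

Lemma DD_rep d : DD d -> exists p : (nat -> V) * nat, rep d p.1 p.2.
Proof.
move=> [N [x [hx ->]]].
exists (fun m => if (m < N)%N then x m else 0, N); split => /=.
- move=> m; case: ifP => h; [by apply: hx | exact: H0].
- by move=> m hm; rewrite ltnNge hm.
- by apply: eq_big_nat => m /andP[_ ->].
Qed.

Lemma rep_uniq d x N y M : rep d x N -> rep d y M -> x =1 y.
Proof.
move=> rx ry j; set K := maxn N (maxn M j.+1).
have hx := rep_sum rx (leq_maxl N _).
have hy := rep_sum ry (leq_trans (leq_maxl M j.+1) (leq_maxr N _)).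
have := rx; case=> hx1 _ _; have := ry; case=> hy1 _ _.
apply/eqP; rewrite -subr_eq0; apply/eqP.
apply: (@zero_decomp (fun m => x m - y m) 0 K).
- by move=> m _; apply: HBB.
- by rewrite sumrB -hx -hy subrr.
- by rewrite /= (leq_trans (leq_maxr M j.+1) (leq_maxr N _)).
Qed.

Definition cmpN (d : V) : (nat -> V) * nat :=
  match pselect (exists p : (nat -> V) * nat, rep d p.1 p.2) with
  | left h => proj1_sig (cid h)
  | right _ => (fun _ => 0, 0%N)
  end.
Definition cmp d := (cmpN d).1.
Definition bnd d := (cmpN d).2.

Lemma cmpP d : DD d -> rep d (cmp d) (bnd d).
Proof.
move=> /DD_rep h; rewrite /cmp /bnd /cmpN.
case: pselect => [h'|//]; exact: (proj2_sig (cid h')).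
Qed.

Lemma cmp_rep d x N : rep d x N -> cmp d =1 x.
Proof. by move=> r; apply: rep_uniq (cmpP (rep_DD r)) r. Qed.

Lemma cmpH d m : DD d -> H m (cmp d m).
Proof. by move=> /cmpP []. Qed.

Lemma rep0 : rep 0 (fun _ => 0) 0.
Proof. by split => //; [move=> m; exact: H0 | rewrite big_geq]. Qed.

Lemma cmp0 m : cmp 0 m = 0.
Proof. exact: (cmp_rep rep0). Qed.

Lemma rep_lin a d e x N y M : rep d x N -> rep e y M ->
  rep (a *: d + e) (fun m => a *: x m + y m) (maxn N M).
Proof.
move=> rx ry; have hx := rep_sum rx (leq_maxl N M).
have hy := rep_sum ry (leq_maxr N M).
have := rx; case=> hx1 hx2 _; have := ry; case=> hy1 hy2 _.
split.
- by move=> m; apply: HZD.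
- move=> m hm; rewrite hx2 ?hy2 ?scaler0 ?addr0 //.
  + exact: leq_trans (leq_maxr N M) hm.
  + exact: leq_trans (leq_maxl N M) hm.
- by rewrite hx hy scaler_sumr -big_split.
Qed.

Lemma DD_lin a d e : DD d -> DD e -> DD (a *: d + e).
Proof. by move=> /cmpP rd /cmpP re; apply: rep_DD (rep_lin a rd re). Qed.

Lemma cmp_lin a d e m : DD d -> DD e -> cmp (a *: d + e) m = a *: cmp d m + cmp e m.
Proof. by move=> /cmpP rd /cmpP re; rewrite (cmp_rep (rep_lin a rd re)). Qed.

Lemma repH n x : H n x -> rep x (fun m => if m == n then x else 0) n.+1.
Proof.
move=> hx; split.
- by move=> m; case: eqP => [->|_]; [exact: hx | exact: H0].
- by move=> m hm; case: eqP => // e; rewrite e ltnn in hm.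
- rewrite big_nat_recr //= eqxx big1_seq ?add0r // => m /andP[_].
  by rewrite mem_index_iota => /andP[_ hm]; case: eqP => // e; rewrite e ltnn in hm.
Qed.

Lemma cmpH_eq n x m : H n x -> cmp x m = if m == n then x else 0.
Proof. by move=> hx; apply: (cmp_rep (repH hx)). Qed.

Lemma DD_H n x : H n x -> DD x.
Proof. by move=> hx; apply: rep_DD (repH hx). Qed.

Lemma cmp_le y j : DD y -> nrm (cmp y j) <= nrm y.
Proof.
move=> Dy; have ry := cmpP Dy.
case: (ltnP j (bnd y)) => hj; last first.
  by have := ry; case=> _ h _; rewrite h // nrm0 nrm_ge0.
have := ry; case=> h1 _ ey.
have horth : forall i k, (i < bnd y)%N -> (k < bnd y)%N -> i <> k ->
    ip (cmp y i) (cmp y k) = 0.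
  by move=> i k _ _ hik; apply: (@Horth _ _ _ _ hik (h1 i) (h1 k)).
have e : nrm (\sum_(0 <= m < bnd y) cmp y m) ^+ 2 =
    \sum_(0 <= m < bnd y) nrm (cmp y m) ^+ 2.
  by rewrite !big_mkord; exact: (pythN ip _ _ horth).
have : nrm (cmp y j) ^+ 2 <= nrm (\sum_(0 <= m < bnd y) cmp y m) ^+ 2.
  rewrite e (bigD1_seq j) ?mem_index_iota ?iota_uniq //=.
  by rewrite lerDl; apply: sumr_ge0 => i _; apply: sqr_ge0.
rewrite [X in _ <= nrm X]ey.
have := nrm_ge0 (cmp y j); have := nrm_ge0 (\sum_(0 <= m < bnd y) cmp y m); nra.
Qed.


Lemma pythN' (z : nat -> V) N :
  (forall i j, (i < N)%N -> (j < N)%N -> i <> j -> ip (z i) (z j) = 0) ->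
  nrm (\sum_(0 <= i < N) z i) ^+ 2 = \sum_(0 <= i < N) nrm (z i) ^+ 2.
Proof. by move=> h; rewrite !big_mkord; exact: (pythN ip _ _ h). Qed.

Lemma sum_shift (F : nat -> V) n p :
  \sum_(n <= j < n + p) F j = \sum_(0 <= k < p) F (n + k)%N.
Proof.
elim: p => [|p IH]; first by rewrite addn0 !big_geq.
by rewrite addnS !big_nat_recr //= ?IH // leq_addr.
Qed.

Section Band.
Variables (T : {linear V -> V}) (b : nat) (Tb : band_limited H b T).

Lemma TH_rep n x : H n x -> exists xs, rep (T x) xs (n + b).+1 /\
  forall m, ~~ (n - b <= m < (n + b).+1)%N -> xs m = 0.
Proof.
move=> /Tb [xs [hxs ->]].
exists (fun m => if (n - b <= m < (n + b).+1)%N then xs m else 0); split; last first.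
  by move=> m /negbTE ->.
split.
- move=> m; case: ifP => h; [exact: hxs | exact: H0].
- by move=> m hm; rewrite ltnNge hm andbF.
rewrite [in RHS](big_cat_nat (n:=n - b)) //=; last by lia.
rewrite [X in _ = X + _]big1_seq ?add0r; last first.
  move=> m /andP[_]; rewrite mem_index_iota => /andP[_ hm].
  by case: ifP => //; lia.
by apply: eq_big_nat => m ->.
Qed.

Lemma DD_T n x : H n x -> DD (T x).
Proof. by move=> /TH_rep [xs [r _]]; apply: rep_DD r. Qed.

Lemma cmpT_supp n x m : H n x -> ~~ (n - b <= m < (n + b).+1)%N -> cmp (T x) m = 0.
Proof. by move=> /TH_rep [xs [r hs]] hm; rewrite (cmp_rep r) hs. Qed.

Lemma band_split n x : H n x ->
  T x = \sum_(0 <= k < b.+1) cmp (T x) (n + k)%N +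
        \sum_(1 <= k < b.+1) (if (k <= n)%N then cmp (T x) (n - k)%N else 0).
Proof.
move=> hx; have DT := DD_T hx; have rT := cmpP DT.
set F := cmp (T x).
have e1 : T x = \sum_(0 <= j < (n + b).+1) F j.
  have := rT; case=> _ hz ->; apply: sum_support => // j hj.
  by apply: (cmpT_supp hx); rewrite negb_and -leqNgt hj orbT.
rewrite {1}e1 (big_cat_nat (n:=n)) //=; last by lia.
rewrite addrC; congr (_ + _); first by rewrite -addnS sum_shift.
rewrite big_nat_rev /=.
set G := fun i => if (i < n)%N && (i < b)%N then F (n - i.+1)%N else 0.
transitivity (\sum_(0 <= i < n) G i).
  apply: eq_big_nat => i /andP[_ hi]; rewrite /G hi /= add0n.
  case: ltnP => hib //; apply: (cmpT_supp hx).
  by rewrite negb_and -ltnNge; apply/orP; left; lia.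
rewrite (@sum_support G n b); first last.
- by move=> j hj; rewrite /G; case: ifP => //; lia.
- by move=> j hj; rewrite /G; case: ifP => //; lia.
rewrite big_add1 /=; apply: eq_big_nat => i /andP[_ hi].
by rewrite /G hi andbT.
Qed.


Lemma sq_mono (a c : R) : 0 <= a -> a <= c -> a ^+ 2 <= c ^+ 2.
Proof. by move=> *; nra. Qed.
Lemma sq_le (a c : R) : 0 <= a -> 0 <= c -> a ^+ 2 <= c ^+ 2 -> a <= c.
Proof. by move=> *; nra. Qed.

Definition Gf (G : V -> nat -> V) d := \sum_(0 <= m < bnd d) G (cmp d m) m.

Lemma Gf_any G d x N : (forall m, G 0 m = 0) -> rep d x N ->
  Gf G d = \sum_(0 <= m < N) G (x m) m.
Proof.
move=> G0 r; have ex := cmp_rep r; have Dd := rep_DD r; have rd := cmpP Dd.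
rewrite /Gf (eq_bigr (fun m => G (x m) m)); last by move=> m _; rewrite ex.
apply: sum_support => j hj.
- by have := rd; case=> _ h _; rewrite -ex h.
- by have := r; case=> _ h _; rewrite h.
Qed.

Lemma Gf_H G n x : (forall m, G 0 m = 0) -> H n x -> Gf G x = G x n.
Proof.
move=> G0 hx; rewrite (Gf_any G0 (repH hx)) big_nat_recr //= eqxx.
by rewrite big1_seq ?add0r // => m /andP[_]; rewrite mem_index_iota => /andP[_ hm];
  case: eqP => [e|_]; [rewrite e ltnn in hm | exact: G0].
Qed.

Lemma Gf_lin G a d e : (forall m, G 0 m = 0) ->
  (forall m a u w, H m u -> H m w -> G (a *: u + w) m = a *: G u m + G w m) ->
  DD d -> DD e -> Gf G (a *: d + e) = a *: Gf G d + Gf G e.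
Proof.
move=> G0 Gl Dd De; have rd := cmpP Dd; have re := cmpP De.
set M := maxn (bnd d) (bnd e).
rewrite (Gf_any G0 (rep_lin a rd re)).
rewrite (Gf_any G0 (rep_widen rd (leq_maxl (bnd d) (bnd e)))) (Gf_any G0 (rep_widen re (leq_maxr (bnd d) (bnd e)))).
rewrite scaler_sumr -big_split /=; apply: eq_bigr => m _.
by apply: Gl; apply: cmpH.
Qed.

Lemma Gf_bound G (C : R) d : 0 <= C -> (forall m, G 0 m = 0) ->
  (forall m u, H m u -> nrm (G u m) <= C * nrm u) ->
  (forall m m' u u', m <> m' -> H m u -> H m' u' -> ip (G u m) (G u' m') = 0) ->
  DD d -> nrm (Gf G d) <= C * nrm d.
Proof.
move=> C0 G0 Gb Go Dd; have rd := cmpP Dd; have := rd; case=> h1 _ ed.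
have e1 : nrm (Gf G d) ^+ 2 = \sum_(0 <= m < bnd d) nrm (G (cmp d m) m) ^+ 2.
  by apply: pythN' => i j _ _ hij; apply: Go.
have e2 : nrm d ^+ 2 = \sum_(0 <= m < bnd d) nrm (cmp d m) ^+ 2.
  rewrite {1}ed; apply: pythN' => i j _ _ hij.
  exact: (@Horth _ _ _ _ hij (h1 i) (h1 j)).
have : nrm (Gf G d) ^+ 2 <= (C * nrm d) ^+ 2.
  rewrite e1 exprMn e2 mulr_sumr; apply: ler_sum => m _.
  rewrite -exprMn; apply: sq_mono; [exact: nrm_ge0 | exact: Gb].
apply: sq_le; [exact: nrm_ge0 | apply: mulr_ge0 => //; exact: nrm_ge0].
Qed.

Definition XG k := fun y m => cmp (T y) (m + k)%N.
Definition YG k := fun y m => if (k <= m)%N then cmp (T y) (m - k)%N else 0.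

Lemma XG0 k m : XG k 0 m = 0. Proof. by rewrite /XG linear0 cmp0. Qed.
Lemma YG0 k m : YG k 0 m = 0. Proof. by rewrite /YG linear0 cmp0; case: ifP. Qed.

Lemma XG_lin k m a u w : H m u -> H m w -> XG k (a *: u + w) m = a *: XG k u m + XG k w m.
Proof. by move=> hu hw; rewrite /XG linearP (cmp_lin a _ (DD_T hu) (DD_T hw)). Qed.

Lemma YG_lin k m a u w : H m u -> H m w -> YG k (a *: u + w) m = a *: YG k u m + YG k w m.
Proof.
move=> hu hw; rewrite /YG; case: ifP => _; last by rewrite scaler0 addr0.
by rewrite linearP (cmp_lin a _ (DD_T hu) (DD_T hw)).
Qed.

Section WithC.
Variables (C : R) (C0 : 0 <= C) (hC : forall x, nrm (T x) <= C * nrm x).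

Lemma XG_bound k m u : H m u -> nrm (XG k u m) <= C * nrm u.
Proof. by move=> hu; apply: le_trans (cmp_le _ (DD_T hu)) (hC u). Qed.

Lemma YG_bound k m u : H m u -> nrm (YG k u m) <= C * nrm u.
Proof.
move=> hu; rewrite /YG; case: ifP => _.
  exact: le_trans (cmp_le _ (DD_T hu)) (hC u).
by rewrite nrm0; apply: mulr_ge0 => //; exact: nrm_ge0.
Qed.

Lemma XG_orth k m m' u u' : m <> m' -> H m u -> H m' u' ->
  ip (XG k u m) (XG k u' m') = 0.
Proof.
move=> hmm hu hu'; apply: (@Horth (m + k)%N (m' + k)%N).
- by move=> e; apply: hmm; lia.
- exact: cmpH (DD_T hu).
- exact: cmpH (DD_T hu').
Qed.

Lemma YG_orth k m m' u u' : m <> m' -> H m u -> H m' u' ->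
  ip (YG k u m) (YG k u' m') = 0.
Proof.
move=> hmm hu hu'; rewrite /YG.
case: ifP => h1; last by rewrite ip0l.
case: ifP => h2; last by rewrite ip0r.
apply: (@Horth (m - k)%N (m' - k)%N).
- by move=> e; apply: hmm; lia.
- exact: cmpH (DD_T hu).
- exact: cmpH (DD_T hu').
Qed.

End WithC.

Definition Xf k := Gf (XG k).
Definition Yf k := Gf (YG k).

Lemma Tdecomp d : DD d ->
  T d = \sum_(0 <= k < b.+1) Xf k d + \sum_(1 <= k < b.+1) Yf k d.
Proof.
move=> Dd; have rd := cmpP Dd; have := rd; case=> h1 _ ed.
rewrite {1}ed linear_sum /=.
rewrite (eq_bigr (fun m => \sum_(0 <= k < b.+1) XG k (cmp d m) m +
                           \sum_(1 <= k < b.+1) YG k (cmp d m) m)); last first.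
  by move=> m _; rewrite (band_split (h1 m)) /XG /YG.
rewrite big_split /=; congr (_ + _); rewrite exchange_big /=.
all: by apply: eq_bigr => k _; rewrite /Xf /Yf /Gf.
Qed.

End Band.
End Decomp.
Set Implicit Arguments.
Unset Strict Implicit.
Section MkLin.
Variables (R : realType) (V : completeNormedModType R[i]) (g : V -> V)
  (gl : forall a u v, g (a *: u + v) = a *: g u + g v).
Definition mklin_fun := g.
HB.instance Definition _ := GRing.isLinear.Build R[i] V V *:%R mklin_fun gl.
Definition mklin : {linear V -> V} := mklin_fun.
Lemma mklinE x : mklin x = g x. Proof. by []. Qed.
End MkLin.

Section Conv.
Variables (R : realType) (V : completeNormedModType R[i]).

Definition cnv (u : nat -> V) (l : V) := forall e : R, 0 < e ->
  exists N, forall j, (N <= j)%N -> nrm (l - u j) < e.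

Lemma nrm_tri (x y z : V) : nrm (x - z) <= nrm (x - y) + nrm (y - z).
Proof. by have := nrmD (x - y) (y - z); rewrite addrA subrK. Qed.

Lemma le_eps (a b K : R) : 0 <= K -> (forall e, 0 < e -> a <= b + K * e) -> a <= b.
Proof.
move=> K0 h; rewrite leNgt; apply/negP => hab.
have e0 : 0 < (a - b) / (2 * (K + 1)).
  by apply: divr_gt0; [rewrite subr_gt0 | lra].
have := h _ e0; set e := (a - b) / (2 * (K + 1)).
have ee : (2 * (K + 1)) * e = a - b by rewrite /e mulrC divfK //; lra.
nra.
Qed.

Lemma conv_uniq u l l' : cnv u l -> cnv u l' -> l = l'.
Proof.
move=> h h'; apply/eqP; rewrite -subr_eq0; apply/eqP/nrm_eq0.
apply/le_anti/andP; split; last exact: nrm_ge0.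
apply: (@le_eps _ 0 2) => // e e0.
have [N hN] := h e e0; have [N' hN'] := h' e e0.
have := hN (maxn N N') (leq_maxl _ _); have := hN' (maxn N N') (leq_maxr _ _).
rewrite nrmB => h1 h2; have := nrm_tri l (u (maxn N N')) l'; lra.
Qed.

Lemma conv_ext u w l : (forall j, u j = w j) -> cnv u l -> cnv w l.
Proof. by move=> e h eps /h [N hN]; exists N => j /hN; rewrite e. Qed.

Lemma conv_lin a u l w m : cnv u l -> cnv w m ->
  cnv (fun j => a *: u j + w j) (a *: l + m).
Proof.
move=> hu hw e e0.
have c0 := ca_ge0 a.
have e1 : 0 < e / (2 * (ca a + 1)) by apply: divr_gt0 => //; lra.
have e2 : 0 < e / 2 by apply: divr_gt0.
have [N1 h1] := hu _ e1; have [N2 h2] := hw _ e2.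
exists (maxn N1 N2) => j hj.
have hj1 : (N1 <= j)%N by apply: leq_trans hj; apply: leq_maxl.
have hj2 : (N2 <= j)%N by apply: leq_trans hj; apply: leq_maxr.
have := h1 j hj1; have := h2 j hj2.
have ee : a *: l + m - (a *: u j + w j) = a *: (l - u j) + (m - w j).
  by rewrite scalerBr; rewrite opprD !addrA; congr (_ + _); rewrite addrAC.
rewrite ee => q2 q1; apply: le_lt_trans (nrmD _ _) _; rewrite nrmZ.
set E1 := e / (2 * (ca a + 1)) in e1 q1.
have hE : (2 * (ca a + 1)) * E1 = e by rewrite /E1 mulrC divfK //; lra.
have hE2 : 2 * (e / 2) = e by rewrite mulrC divfK.
have := nrm_ge0 (l - u j); nra.
Qed.

Lemma conv_const l : cnv (fun _ => l) l.
Proof. by move=> e e0; exists 0%N => j _; rewrite subrr nrm0. Qed.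

Lemma conv_add u l w m : cnv u l -> cnv w m -> cnv (fun j => u j + w j) (l + m).
Proof.
move=> hu hw; have := conv_lin 1 hu hw; rewrite scale1r.
by apply: conv_ext => j; rewrite scale1r.
Qed.

Lemma conv_sum (I : Type) (r : seq I) (u : I -> nat -> V) (l : I -> V) :
  (forall i, cnv (u i) (l i)) ->
  cnv (fun j => \sum_(i <- r) u i j) (\sum_(i <- r) l i).
Proof.
move=> h; elim: r => [|i r IH].
  by rewrite big_nil; apply: (conv_ext (u := fun _ => 0)) => [j|]; [rewrite big_nil | apply: conv_const].
rewrite big_cons; apply: (conv_ext (u := fun j => u i j + \sum_(i0 <- r) u i0 j)).
  by move=> j; rewrite big_cons.
exact: conv_add.
Qed.

Lemma conv_bounded (L : {linear V -> V}) (K : R) u v : 0 <= K ->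
  (forall x, nrm (L x) <= K * nrm x) -> cnv u v -> cnv (fun j => L (u j)) (L v).
Proof.
move=> K0 hL h e e0.
have e1 : 0 < e / (K + 1) by apply: divr_gt0 => //; lra.
have [N hN] := h _ e1; exists N => j /hN hj.
rewrite -linearB; apply: le_lt_trans (hL _) _.
have hE : (K + 1) * (e / (K + 1)) = e by rewrite mulrC divfK //; lra.
have := nrm_ge0 (v - u j); nra.
Qed.

Lemma inv_pos (j : nat) : 0 < (j.+1%:R : R)^-1.
Proof. by rewrite invr_gt0 ltr0n. Qed.

Lemma arch (e : R) : 0 < e -> exists N, forall j, (N <= j)%N -> (j.+1%:R : R)^-1 < e.
Proof.
move=> e0; exists (Num.bound e^-1) => j hj.
have ei : 0 < e^-1 by rewrite invr_gt0.
have h1 := archi_boundP (ltW ei).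
have h2 : (Num.bound e^-1)%:R <= (j.+1%:R : R) by rewrite ler_nat; lia.
rewrite -[e]invrK ltf_pV2 ?posrE ?invr_gt0 ?ltr0n //.
exact: lt_le_trans h1 h2.
Qed.

End Conv.
Arguments cnv {R V}.
Section Ext.
Variables (R : realType) (V : completeNormedModType R[i]) (D : set V)
  (Dlin : forall a x y, D x -> D y -> D (a *: x + y))
  (Dapx : forall v (e : R), 0 < e -> exists d, D d /\ nrm (v - d) < e).

Definition apx v j : V := sval (cid (Dapx v (inv_pos R j))).

Lemma approxP v j : D (apx v j) /\ nrm (v - apx v j) < (j.+1%:R)^-1.
Proof. by rewrite /apx; case: cid. Qed.

Lemma conv_approx v : cnv (apx v) v.
Proof.
move=> e /arch [N hN]; exists N => j /hN; apply: lt_trans.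
by have [] := approxP v j.
Qed.

Lemma DB x y : D x -> D y -> D (x - y).
Proof. by move=> hx hy; have := Dlin (-1) hy hx; rewrite scaleN1r addrC. Qed.

Section F.
Variables (f : V -> V) (flin : forall a x y, D x -> D y -> f (a *: x + y) = a *: f x + f y)
  (C : R) (C0 : 0 <= C) (fb : forall x, D x -> nrm (f x) <= C * nrm x).

Lemma f_sub x y : D x -> D y -> f (x - y) = f x - f y.
Proof. by move=> hx hy; have := flin (-1) hy hx; rewrite !scaleN1r !(addrC (- _)). Qed.

Lemma f_bnd_diff x y : D x -> D y -> nrm (f x - f y) <= C * nrm (x - y).
Proof. by move=> hx hy; rewrite -f_sub //; apply: fb; apply: DB. Qed.

Lemma fcauchy v : forall e : R, 0 < e -> exists N, forall i j, (N <= i)%N -> (N <= j)%N ->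
  nrm (f (apx v i) - f (apx v j)) < e.
Proof.
move=> e e0.
have C0' := C0.
have d0 : 0 < e / (2 * C + 1) by apply: divr_gt0 => //; lra.
have [N hN] := conv_approx v d0; exists N => i j hi hj.
have hd : (2 * C + 1) * (e / (2 * C + 1)) = e by rewrite mulrC divfK //; lra.
set d := e / (2 * C + 1) in d0 hN hd.
have h1 := hN i hi; have h2 := hN j hj.
have [Di _] := approxP v i; have [Dj _] := approxP v j.
apply: le_lt_trans (f_bnd_diff Di Dj) _.
have := nrm_tri (apx v i) v (apx v j); rewrite [nrm (apx v i - v)]nrmB => ht.
have s1 : nrm (apx v i - apx v j) <= 2 * d by lra.
have s2 : C * nrm (apx v i - apx v j) <= C * (2 * d) by apply: ler_wpM2l.
lra.
Qed.

Definition extf v : V := sval (cid (complete_seq _ (fcauchy v))).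

Lemma ext_conv v : cnv (fun j => f (apx v j)) (extf v).
Proof. by rewrite /extf; case: cid. Qed.

Lemma ext_conv_any v (d : nat -> V) : (forall j, D (d j)) -> cnv d v ->
  cnv (fun j => f (d j)) (extf v).
Proof.
move=> Dd hd e e0; have C0' := C0.
have e2 : 0 < e / 2 by apply: divr_gt0.
have d0 : 0 < e / (4 * (C + 1)) by apply: divr_gt0 => //; lra.
have hE : (4 * (C + 1)) * (e / (4 * (C + 1))) = e by rewrite mulrC divfK //; lra.
have hE2 : 2 * (e / 2) = e by rewrite mulrC divfK.
set del := e / (4 * (C + 1)) in d0 hE.
have [N1 h1] := ext_conv v e2.
have [N2 h2] := conv_approx v d0.
have [N3 h3] := hd _ d0.
exists (maxn N1 (maxn N2 N3)) => j hj.
have hj1 : (N1 <= j)%N by apply: leq_trans hj; apply: leq_maxl.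
have hj2 : (N2 <= j)%N by apply: leq_trans hj; rewrite leq_max leq_maxl orbT.
have hj3 : (N3 <= j)%N by apply: leq_trans hj; rewrite leq_max leq_maxr orbT.
have q1 := h1 j hj1; have q2 := h2 j hj2; have q3 := h3 j hj3.
have [Da _] := approxP v j.
have t1 := nrm_tri (extf v) (f (apx v j)) (f (d j)).
have t2 := f_bnd_diff Da (Dd j).
have t3 := nrm_tri (apx v j) v (d j); rewrite [nrm (apx v j - v)]nrmB in t3.
have := nrm_ge0 (v - apx v j); have := nrm_ge0 (v - d j).
have := nrm_ge0 (apx v j - d j); nra.
Qed.

Lemma ext_D d : D d -> extf d = f d.
Proof.
move=> Dd; apply: (@conv_uniq _ _ (fun _ => f d)); last exact: conv_const.
by apply: ext_conv_any => // ; exact: conv_const.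
Qed.

Lemma ext_lin a v w : extf (a *: v + w) = a *: extf v + extf w.
Proof.
have Dd j : D (a *: apx v j + apx w j).
  by apply: Dlin; [exact: (approxP v j).1 | exact: (approxP w j).1].
have hc := ext_conv_any Dd (conv_lin a (conv_approx v) (conv_approx w)).
apply: (conv_uniq hc); apply: (conv_ext (u := fun j => a *: f (apx v j) + f (apx w j))).
  by move=> j; rewrite flin //; [exact: (approxP v j).1 | exact: (approxP w j).1].
exact: conv_lin (ext_conv v) (ext_conv w).
Qed.

Lemma ext_bound v : nrm (extf v) <= C * nrm v.
Proof.
have C0' := C0.
apply: (@le_eps _ _ _ (1 + C)); first lra.
move=> e e0.
have [N1 h1] := ext_conv v e0; have [N2 h2] := conv_approx v e0.
set j := maxn N1 N2.
have q1 := h1 j (leq_maxl _ _); have q2 := h2 j (leq_maxr _ _).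
have [Da _] := approxP v j.
have t1 := nrm_tri (extf v) (f (apx v j)) 0; rewrite !subr0 in t1.
have t2 := fb Da.
have t3 := nrm_tri (apx v j) v 0; rewrite !subr0 nrmB in t3.
have := nrm_ge0 (apx v j); have := nrm_ge0 v; nra.
Qed.

End F.
End Ext.
Set Implicit Arguments.
Unset Strict Implicit.

Section Final.
Variables (R : realType) (V : completeNormedModType R[i]) (ip : inner_product V)
  (H : nat -> set V) (HD : orth_decomp ip H).

Lemma ip_sum_single (r : seq nat) j (F : nat -> V) y : j \in r -> uniq r ->
  (forall k, k \in r -> k != j -> ip (F k) y = 0) ->
  ip (\sum_(k <- r) F k) y = ip (F j) y.
Proof.
move=> jr ur h; rewrite ip_suml (bigD1_seq j) //= big_seq_cond big1 ?addr0 //.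
by move=> k /andP[kr kj]; apply: h.
Qed.

Lemma ip_sum_zero (r : seq nat) (F : nat -> V) y :
  (forall k, k \in r -> ip (F k) y = 0) -> ip (\sum_(k <- r) F k) y = 0.
Proof. by move=> h; rewrite ip_suml big_seq big1 // => k /h. Qed.

Lemma pieces_ip b n (P Q : nat -> V) (S : V) :
  (forall k, (k <= b)%N -> H (n + k)%N (P k)) ->
  (forall k, (1 <= k <= b)%N -> ((k <= n)%N -> H (n - k)%N (Q k)) /\ ((n < k)%N -> Q k = 0)) ->
  S = \sum_(0 <= k < b.+1) P k + \sum_(1 <= k < b.+1) Q k ->
  (forall j, (j <= b)%N -> ip S (P j) = ip (P j) (P j)) /\
  (forall j, (1 <= j <= b)%N -> ip S (Q j) = ip (Q j) (Q j)).
Proof.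
move=> hP hQ ->; split => j hj.
  rewrite ipDl (ip_sum_zero (r := index_iota 1 b.+1)) ?addr0; last first.
    move=> k; rewrite mem_index_iota => hk.
    have [hk1 hk2] := hQ k hk.
    case: (leqP k n) => hkn; last by rewrite hk2 // ip0l.
    apply: (@Horth _ _ _ _ HD (n - k)%N (n + j)%N) => //; [lia | exact: hk1 | exact: hP].
  apply: ip_sum_single; [by rewrite mem_index_iota; lia | by rewrite /index_iota iota_uniq |].
  move=> k; rewrite mem_index_iota => hk kj.
  apply: (@Horth _ _ _ _ HD (n + k)%N (n + j)%N); [lia | apply: hP; lia | exact: hP].
have [hj1 hj2] := hQ j hj.
case: (leqP j n) => hjn; last by rewrite hj2 // !ip0r.
rewrite ipDl (ip_sum_zero (r := index_iota 0 b.+1)) ?add0r; last first.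
  move=> k; rewrite mem_index_iota => hk.
  apply: (@Horth _ _ _ _ HD (n + k)%N (n - j)%N); [lia | apply: hP; lia | exact: hj1].
apply: ip_sum_single; [by rewrite mem_index_iota; lia | by rewrite /index_iota iota_uniq |].
move=> k; rewrite mem_index_iota => hk kj.
have [hk1 hk2] := hQ k hk.
case: (leqP k n) => hkn; last by rewrite hk2 // ip0l.
apply: (@Horth _ _ _ _ HD (n - k)%N (n - j)%N); [lia | exact: hk1 | exact: hj1].
Qed.

Lemma lin_eq_dense (L1 L2 : {linear V -> V}) : continuous L1 -> continuous L2 ->
  (forall d, DD H d -> L1 d = L2 d) -> L1 =1 L2.
Proof.
move=> c1 c2 h v.
have [C1 [C10 h1]] := op_bound L1 c1; have [C2 [C20 h2]] := op_bound L2 c2.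
apply/eqP; rewrite -subr_eq0; apply/eqP/nrm_eq0.
apply/le_anti/andP; split; last exact: nrm_ge0.
apply: (@le_eps _ _ 0 (C1 + C2)); first lra.
move=> e e0; have [d [Dd hd]] := dense_approx _ (Hdense HD) v _ e0.
apply: le_trans (nrm_tri _ (L1 d) _) _.
rewrite -[L1 v - L1 d]linearB (h d Dd) [nrm (L2 d - _)]nrmB -linearB.
have s1 : C1 * nrm (v - d) <= C1 * e by apply: ler_wpM2l; apply: ltW.
have s2 : C2 * nrm (v - d) <= C2 * e by apply: ler_wpM2l; apply: ltW.
have := h1 (v - d); have := h2 (v - d); lra.
Qed.


Lemma piece_le (S u : V) : ip S u = ip u u -> nrm u <= nrm S.
Proof.
move=> h; have h0 : ip u (S - u) = 0.
  by rewrite ip_conj ipBl h subrr conjC0.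
by have := pyth2_le ip _ _ h0; rewrite (addrC u) subrK.
Qed.

Lemma lin_eq_DD (L1 L2 : {linear V -> V}) :
  (forall n x, H n x -> L1 x = L2 x) -> forall d, DD H d -> L1 d = L2 d.
Proof.
move=> h d Dd; have := cmpP HD Dd; case=> h1 _ ->.
by rewrite !linear_sum; apply: eq_bigr => m _; apply: (h m).
Qed.

Lemma uniq_decomp b T (X Y X' Y' : nat -> {linear V -> V}) :
  band_decomposition H b T X Y -> band_decomposition H b T X' Y' ->
  (forall k, (k <= b)%N -> X k =1 X' k) /\ (forall k, (1 <= k <= b)%N -> Y k =1 Y' k).
Proof.
move=> [hX hY hT] [hX' hY' hT'].
have onH : forall n x, H n x ->
    (forall k, (k <= b)%N -> X k x = X' k x) /\ (forall k, (1 <= k <= b)%N -> Y k x = Y' k x).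
  move=> n x hx.
  have hP : forall k, (k <= b)%N -> H (n + k)%N (X k x - X' k x).
    move=> k hk; apply: (HBB HD); [exact: (hX k hk).2 | exact: (hX' k hk).2].
  have hQ : forall k, (1 <= k <= b)%N ->
      ((k <= n)%N -> H (n - k)%N (Y k x - Y' k x)) /\ ((n < k)%N -> Y k x - Y' k x = 0).
    move=> k hk; have [_ l1] := hY k hk; have [_ l2] := hY' k hk.
    have [a1 b1] := l1 n x hx; have [a2 b2] := l2 n x hx.
    split => h; first by apply: (HBB HD); [exact: a1 | exact: a2].
    by rewrite b1 // b2 // subrr.
  have hS : 0 = \sum_(0 <= k < b.+1) (X k x - X' k x) + \sum_(1 <= k < b.+1) (Y k x - Y' k x).
    by rewrite !sumrB addrACA -opprD -hT -hT' subrr.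
  have [p1 p2] := pieces_ip hP hQ hS.
  split => k hk; apply/eqP; rewrite -subr_eq0; apply/eqP/(ip_self_eq0 ip).
    by rewrite -p1 // ip0l.
  by rewrite -p2 // ip0l.
split => k hk; apply: lin_eq_dense.
- exact: (hX k hk).1.
- exact: (hX' k hk).1.
- by apply: lin_eq_DD => n x hx; have [h _] := onH n x hx; apply: h.
- exact: (hY k hk).1.
- exact: (hY' k hk).1.
- by apply: lin_eq_DD => n x hx; have [_ h] := onH n x hx; apply: h.
Qed.

Lemma restr_norm_ge0 (S : {linear V -> V}) n : (0 <= restr_norm S (H n))%E.
Proof.
apply: (@le_trans _ _ ((complex.Re `|S 0|)%:E)).
  by rewrite linear0 normr0 /= lexx.
apply: ereal_sup_ubound => /=; exists (0 : V) => //.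
by split; [exact: (H0 HD) | rewrite normr0 ler01].
Qed.

Lemma summable_le (S T : {linear V -> V}) :
  (forall n x, H n x -> nrm (S x) <= nrm (T x)) -> summable_op H T -> summable_op H S.
Proof.
rewrite /summable_op => hST hs; apply: le_lt_trans hs.
apply: lee_nneseries => [i _ _|n _]; first exact: restr_norm_ge0.
apply: ge_ereal_sup => _ [x [hx hx1] <-].
apply: (@le_trans _ _ ((complex.Re `|T x|)%:E)).
  by rewrite lee_fin; apply: hST hx.
by apply: ereal_sup_ubound => /=; exists x.
Qed.

Lemma summ_decomp b T (X Y : nat -> {linear V -> V}) :
  band_decomposition H b T X Y -> summable_op H T ->
  (forall k, (k <= b)%N -> summable_op H (X k)) /\
  (forall k, (1 <= k <= b)%N -> summable_op H (Y k)).
Proof.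
move=> [hX hY hT] hs.
have pc : forall n x, H n x ->
    (forall j, (j <= b)%N -> ip (T x) (X j x) = ip (X j x) (X j x)) /\
    (forall j, (1 <= j <= b)%N -> ip (T x) (Y j x) = ip (Y j x) (Y j x)).
  move=> n x hx; apply: pieces_ip (hT x).
  - by move=> k hk; exact: (hX k hk).2 n x hx.
  - by move=> k hk; have [_ l] := hY k hk; exact: l n x hx.
split => k hk; apply: summable_le hs => n x hx; apply: piece_le.
  by have [p _] := pc n x hx; apply: p.
by have [_ p] := pc n x hx; apply: p.
Qed.

End Final.

Local Close Scope complex_scope.
Theorem proposition2p5 (R : realType) (V : completeNormedModType R[i])
    (ip : inner_product V) (H : nat -> set V) (HD : orth_decomp ip H)
    (T : {linear V -> V}) (Tbd : bounded_op T) (b : nat)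
    (Tb : band_limited H b T) :
  (exists X Y : nat -> {linear V -> V}, band_decomposition H b T X Y) /\
  (forall X Y X' Y' : nat -> {linear V -> V},
     band_decomposition H b T X Y -> band_decomposition H b T X' Y' ->
     (forall k, (k <= b)%N -> X k =1 X' k) /\
     (forall k, (1 <= k <= b)%N -> Y k =1 Y' k)) /\
  (summable_op H T ->
   forall X Y : nat -> {linear V -> V}, band_decomposition H b T X Y ->
     (forall k, (k <= b)%N -> summable_op H (X k)) /\
     (forall k, (1 <= k <= b)%N -> summable_op H (Y k))).
Proof.
split; last split.
2: by move=> X Y X' Y' h1 h2; have := uniq_decomp HD h1 h2.
2: by move=> hs X Y hd; have := summ_decomp HD hd hs.
have Dlin : forall a x y, DD H x -> DD H y -> DD H (a *: x + y).
  by move=> a x y Dx Dy; have := DD_lin HD a Dx Dy.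
have Dapx := dense_approx (DD H) (Hdense HD).
have [C [C0 hC]] := op_bound T Tbd; have C0' := ltW C0.
have flX : forall k a x y, DD H x -> DD H y ->
    Xf H T k (a *: x + y) = a *: Xf H T k x + Xf H T k y.
  move=> k a x y Dx Dy; apply: (Gf_lin HD) => //; first by move=> m; have := XG0 HD T k m.
  by move=> m a0 u w hu hw; have := XG_lin HD Tb k a0 hu hw.
have flY : forall k a x y, DD H x -> DD H y ->
    Yf H T k (a *: x + y) = a *: Yf H T k x + Yf H T k y.
  move=> k a x y Dx Dy; apply: (Gf_lin HD) => //; first by move=> m; have := YG0 HD T k m.
  by move=> m a0 u w hu hw; have := YG_lin HD Tb k a0 hu hw.
have fbX : forall k x, DD H x -> nrm (Xf H T k x) <= C * nrm x.
  move=> k x Dx; apply: (Gf_bound HD C0') => //.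
  - by move=> m; have := XG0 HD T k m.
  - by move=> m u hu; have := XG_bound HD Tb hC k hu.
  - by move=> m m' u u' hmm hu hu'; have := XG_orth HD Tb C0' k hmm hu hu'.
have fbY : forall k x, DD H x -> nrm (Yf H T k x) <= C * nrm x.
  move=> k x Dx; apply: (Gf_bound HD C0') => //.
  - by move=> m; have := YG0 HD T k m.
  - by move=> m u hu; have := YG_bound HD Tb C0' hC k hu.
  - by move=> m m' u u' hmm hu hu'; have := YG_orth HD Tb C0' k hmm hu hu'.
pose X k := @mklin _ _ (extf Dlin Dapx (flX k) C0' (fbX k))
  (ext_lin Dlin Dapx (flX k) C0' (fbX k)).
pose Y k := @mklin _ _ (extf Dlin Dapx (flY k) C0' (fbY k))
  (ext_lin Dlin Dapx (flY k) C0' (fbY k)).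
exists X, Y; split.
- move=> k hk; split.
    by apply: (bound_cont _ C) => x; exact: ext_bound.
  move=> n x hx; rewrite mklinE (ext_D Dlin Dapx (flX k) C0' (fbX k) (DD_H HD hx)).
  rewrite /Xf (Gf_H HD (XG0 HD T k) hx) /XG.
  by have := cmpH HD (n + k)%N (DD_T HD Tb hx).
- move=> k hk; split.
    by apply: (bound_cont _ C) => x; exact: ext_bound.
  move=> n x hx; rewrite mklinE (ext_D Dlin Dapx (flY k) C0' (fbY k) (DD_H HD hx)).
  rewrite /Yf (Gf_H HD (YG0 HD T k) hx) /YG; split => h.
    by rewrite h; have := cmpH HD (n - k)%N (DD_T HD Tb hx).
  by rewrite leqNgt h.
- move=> v.
  have h1 := conv_bounded C0' hC (conv_approx Dapx v).
  apply: (conv_uniq h1).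
  apply: (conv_ext (u := fun j => \sum_(0 <= k < b.+1) Xf H T k (apx Dapx v j) +
                                 \sum_(1 <= k < b.+1) Yf H T k (apx Dapx v j))).
    by move=> j; rewrite -(Tdecomp HD Tb (approxP Dapx v j).1).
  apply: conv_add; apply: conv_sum => k; exact: ext_conv.
Qed.
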